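(* Let $p$ be an odd prime. Let $M_p$ be the number of solutions $(x,y,z)\in\mathbb{F}_p^3$ of $$z^2=(x^2y^2+1)(x^2+y^2),$$ and let $N_p$ be the number of solutions $(x,y)\in\mathbb{F}_p^2$ of $y^2=x^3-x$. Then $$M_p=(p+1)^2+(N_p-p)^2+1=\begin{cases}(p+1)^2+J(k)^2+1 & \text{if } p=4k+1,\\ (p+1)^2+1 & \text{if } p=4k+3,\end{cases}$$ where for $p=4k+1$, $J(k)=\sum_{i=1}^{4k-2}\big(\frac{i(i+1)(i+2)}{p}\big)$.
   Context: $\big(\frac{a}{p}\big)$ is the Legendre symbol. *)

(* Defs.v *)
From HB Require Import structures.
From mathcomp Require Import all_boot all_order all_algebra.
Set Implicit Arguments. Unset Strict Implicit. Unset Printing Implicit Defensive.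
Import Order.TTheory GRing.Theory Num.Theory.
Local Open Scope ring_scope.

Definition legendre (a : int) (p : nat) : int :=
  if (p%:Z %| a)%Z then 0
  else if [exists x : 'F_p, x ^+ 2 == a%:~R] then 1 else -1.

Definition M_count (p : nat) : nat :=
  #|[set t : 'F_p * 'F_p * 'F_p |
      let: (x, y, z) := t in
      z ^+ 2 == (x ^+ 2 * y ^+ 2 + 1) * (x ^+ 2 + y ^+ 2)]|.

Definition N_count (p : nat) : nat :=
  #|[set t : 'F_p * 'F_p | let: (x, y) := t in y ^+ 2 == x ^+ 3 - x]|.

Definition J (p k : nat) : int :=
  \sum_(1 <= i < (4 * k - 2).+1) legendre (i * (i + 1) * (i + 2))%N%:Z p.

(* Main.v *)
Require Import Defs.
From mathcomp Require Import all_boot all_order all_algebra.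
From mathcomp Require Import finfield ring lra zify.
Set Implicit Arguments. Unset Strict Implicit. Unset Printing Implicit Defensive.
Import Order.TTheory GRing.Theory Num.Theory.
Local Open Scope ring_scope.


Section Chi.
Variable F : finFieldType.
Hypothesis h2 : (2:F) != 0.

Definition chi (x : F) : int :=
  if x == 0 then 0 else if [exists y, y ^+ 2 == x] then 1 else -1.

Lemma chi0 : chi 0 = 0. Proof. by rewrite /chi eqxx. Qed.

Lemma card_sqrt (a : F) : (#|[set z : F | z ^+ 2 == a]|)%:Z = 1 + chi a.
Proof.
rewrite /chi; have [->|a0] := eqVneq a 0.
  suff -> : [set z : F | z ^+ 2 == 0] = [set 0] by rewrite cards1.
  by apply/setP => z; rewrite !inE sqrf_eq0.
case: existsP => [[y /eqP hy]|hn].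
  have y0 : y != 0 by apply: contraNneq a0 => y0; rewrite -hy y0 expr0n.
  suff -> : [set z : F | z ^+ 2 == a] = [set y; -y].
    rewrite cards2; suff -> : y != - y by [].
    apply: contra y0 => /eqP e; have : 2 * y = 0.
      by rewrite mulr2n mulrDl mul1r {1}e addNr.
    by move/eqP; rewrite mulf_eq0 (negPf h2).
  by apply/setP => z; rewrite !inE -hy eqf_sqr.
suff -> : [set z : F | z ^+ 2 == a] = set0 by rewrite cards0.
by apply/setP => z; rewrite !inE; apply/negP => hz; apply: hn; exists z.
Qed.

Lemma card_setZ (T : finType) (P : pred T) :
  (#|[set t | P t]|)%:Z = \sum_t (P t)%:R.
Proof.
rewrite -sum1_card -natz natr_sum big_mkcond /=; apply: eq_bigr => t _.
by rewrite inE; case: (P t).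
Qed.

Lemma sum_chi : \sum_a chi a = 0.
Proof.
have : \sum_a (1 + chi a) = #|F|%:Z.
  under eq_bigr do rewrite -card_sqrt card_setZ.
  rewrite exchange_big /= -sum1_card -natz natr_sum; apply: eq_bigr => z _.
  rewrite (bigD1 (z ^+ 2)) //= eqxx big1 ?addr0 // => a /negPf.
  by rewrite eq_sym => ->.
rewrite big_split /= sumr_const natz -[X in _ = X]addr0.
exact: addrI.
Qed.

Definition SQ := [set a : F | (a != 0) && [exists y, y ^+ 2 == a]].
Definition NS := [set a : F | ~~ [exists y, y ^+ 2 == a]].
Definition m := #|SQ|.

Lemma sum_nz : \sum_(a : F) (a != 0)%:R = (#|F|%:Z - 1).
Proof.
rewrite (bigD1 0) //= eqxx add0r.
rewrite (eq_bigr (fun _ => 1)); last by move=> a ->.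
rewrite sumr_const -natz.
have -> : #|[pred i : F | i != 0]| = #|F|.-1.
  by rewrite -(cardC1 (0 : F)); apply: eq_card => a; rewrite !inE.
have : (0 < #|F|)%N by apply/card_gt0P; exists 0.
by case: #|F| => // n _ /=; rewrite -addn1 natrD addrK.
Qed.

Lemma card_SQNS : (#|SQ| = #|NS|) /\ (#|F| = (#|SQ| + #|NS|).+1)%N.
Proof.
have e1 : forall a, chi a = (a \in SQ)%:R - (a \in NS)%:R.
  move=> a; rewrite /chi !inE; case: eqVneq => [->|] /=.
    by case: existsP => // [[]]; exists 0; rewrite expr0n.
  by case: existsP.
have e2 : forall a : F, (a \in SQ)%:R + (a \in NS)%:R = ((a != 0 :> F)%:R : int).
  move=> a; rewrite !inE; case: eqVneq => [->|] /=.
    by case: existsP => // [[]]; exists 0; rewrite expr0n.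
  by case: existsP.
have s1 : \sum_(a : F) ((a \in SQ)%:R - (a \in NS)%:R) = 0 :> int.
  etransitivity; last exact: sum_chi. by apply: eq_bigr => b _; rewrite e1.
have s2 : \sum_(a : F) ((a \in SQ)%:R + (a \in NS)%:R) = #|F|%:Z - 1 :> int.
  etransitivity; last exact: sum_nz. by apply: eq_bigr => b _; rewrite e2.
rewrite sumrB big_split /= -!card_setZ in s1 s2.
have eS : forall A : {set F}, [set t in A] = A by move=> A; apply/setP => t; rewrite inE.
rewrite !eS in s1 s2.
have h0 : (0 < #|F|)%N by apply/card_gt0P; exists 0.
move/eqP: s1; rewrite subr_eq0 => /eqP [e]; split => //.
by apply/eqP; rewrite -(eqr_nat int) -addn1 !natrD !natz s2 subrK.
Qed.

Lemma m_pos : (0 < m)%N.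
Proof. apply/card_gt0P; exists (1 : F); rewrite inE oner_neq0 /=; apply/existsP; exists (1 : F); by rewrite expr1n. Qed.

Lemma fermat (x : F) : x != 0 -> x ^+ (m + m) = 1.
Proof.
move=> x0; have [e1 e2] := card_SQNS; have := expf_card x.
rewrite e2 -/m -e1 exprS => /eqP; rewrite -[X in _ == X]mulr1 (inj_eq (mulfI x0)).
by move/eqP.
Qed.

Lemma sq_pow x : x \in SQ -> x ^+ m = 1.
Proof.
rewrite inE => /andP [x0 /existsP [y /eqP hy]].
have y0 : y != 0 by apply: contraNneq x0 => y0; rewrite -hy y0 expr0n.
by rewrite -hy -exprM mul2n -addnn fermat.
Qed.

Lemma SQNS_disj x : x \in SQ -> x \notin NS.
Proof. by rewrite !inE negbK => /andP []. Qed.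

Lemma ns_pow x : x \in NS -> x ^+ m = -1.
Proof.
move=> xN.
have x0 : x != 0 by apply: contraTneq xN => ->; rewrite inE negbK; apply/existsP; exists 0; rewrite expr0n.
have : (x ^+ m) ^+ 2 == 1 by rewrite -exprM muln2 -addnn fermat.
rewrite sqrf_eq1 => /orP [/eqP h1|/eqP //].
exfalso.
suff : (m.+1 < m.+1)%N by rewrite ltnn.
have hs : size (x :: enum SQ) = m.+1 by rewrite /= -cardE.
rewrite -{1}hs -(@size_XnsubC F m 1) ?m_pos //; apply: max_poly_roots.
- by rewrite -size_poly_eq0 size_XnsubC ?m_pos.
- rewrite /= /root !hornerE h1 subrr eqxx /=; apply/allP => y.
  by rewrite mem_enum => /sq_pow hy; rewrite !hornerE hy subrr.
- rewrite /= enum_uniq andbT mem_enum; apply: contraL xN => /SQNS_disj //.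
Qed.

Lemma chi_pow x : (chi x)%:~R = x ^+ m.
Proof.
rewrite /chi; case: eqVneq => [->|x0]; first by rewrite expr0n (negPf (lt0n_neq0 m_pos)).
case: existsP => [h|h].
  by rewrite sq_pow // inE x0 /=; apply/existsP.
by rewrite ns_pow // inE; apply/existsP.
Qed.

Lemma chi_vals x : [|| chi x == 0, chi x == 1 | chi x == -1].
Proof. by rewrite /chi; case: ifP => _ //; case: ifP. Qed.

Lemma intr_inj3 (i j : int) : [|| i == 0, i == 1 | i == -1] -> [|| j == 0, j == 1 | j == -1] ->
  (i%:~R : F) = j%:~R -> i = j.
Proof.
have n10 : (1 : F) != 0 := oner_neq0 _.
have nm : (1 : F) != -1.
  apply: contra h2 => /eqP e; apply/eqP; rewrite mulr2n {2}e subrr //.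
have nm0 : (-1 : F) != 0 by rewrite oppr_eq0.
move=> hi hj.
have r1 : (1 : int)%:~R = 1 :> F by [].
have r0 : (0 : int)%:~R = 0 :> F by [].
have rm : (-1 : int)%:~R = -1 :> F by rewrite mulrN1z.
case/or3P: hi => /eqP ->; case/or3P: hj => /eqP -> //= => e; exfalso; move/eqP: e;
  rewrite ?r1 ?r0 ?rm.
all: first [ by rewrite (negPf n10) | by rewrite eq_sym (negPf n10) | by rewrite (negPf nm)
  | by rewrite eq_sym (negPf nm) | by rewrite (negPf nm0) | by rewrite eq_sym (negPf nm0) ].
Qed.
Lemma chiM x y : chi (x * y) = chi x * chi y.
Proof.
apply: intr_inj3; first exact: chi_vals.
  by case/or3P: (chi_vals x) => /eqP ->; case/or3P: (chi_vals y) => /eqP ->.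
by rewrite intrM !chi_pow exprMn.
Qed.

Lemma chi1 : chi 1 = 1.
Proof. rewrite /chi oner_eq0; case: existsP => // [[]]; exists 1; by rewrite expr1n. Qed.

Lemma chi_sqr (x : F) : x != 0 -> chi (x ^+ 2) = 1.
Proof.
move=> x0; rewrite /chi sqrf_eq0 (negPf x0); case: existsP => // [[]]; by exists x.
Qed.

Lemma chiMsq (u w : F) : u != 0 -> chi (u ^+ 2 * w) = chi w.
Proof. by move=> u0; rewrite chiM chi_sqr // mul1r. Qed.

Lemma chi_sq2 (x : F) : chi x * chi x = (x != 0)%:R.
Proof. by rewrite -chiM -expr2; case: eqVneq => [->|x0]; rewrite ?expr0n ?chi0 ?chi_sqr. Qed.

Lemma sumsq (g : F -> int) : \sum_x g (x ^+ 2) = \sum_u (1 + chi u) * g u.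
Proof.
under [RHS]eq_bigr do rewrite -card_sqrt card_setZ mulr_suml.
rewrite exchange_big /=; apply: eq_bigr => z _.
rewrite (bigD1 (z ^+ 2)) //= eqxx mul1r big1 ?addr0 // => a /negPf.
by rewrite eq_sym => ->; rewrite mul0r.
Qed.

Lemma sum_shift (f : F -> int) c : \sum_x f (x + c) = \sum_x f x.
Proof. by rewrite [RHS](reindex_inj (addIr c)). Qed.

Lemma sum_scale (f : F -> int) c : c != 0 -> \sum_x f (c * x) = \sum_x f x.
Proof. by move=> c0; rewrite [RHS](reindex_inj (mulfI c0)). Qed.

Lemma sum_opp (f : F -> int) : \sum_x f (- x) = \sum_x f x.
Proof. by rewrite [RHS](reindex_inj (@oppr_inj F)). Qed.

Lemma sum_inv (f : F -> int) : \sum_x f (x ^-1) = \sum_x f x.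
Proof. by rewrite [RHS](reindex_inj (@invr_inj F)). Qed.

Definition q : int := #|F|%:Z.

Lemma Ld (d : F) : \sum_v chi (v ^+ 2 - d) = if d == 0 then q - 1 else -1.
Proof.
case: eqVneq => [->|d0].
  rewrite /q -sum_nz; apply: eq_bigr => v _; rewrite subr0.
  by case: eqVneq => [->|v0]; rewrite ?expr0n ?chi0 ?chi_sqr.
rewrite (sumsq (fun w => chi (w - d))) /=.
under eq_bigr do rewrite mulrDl mul1r.
rewrite big_split /= (sum_shift chi) sum_chi add0r.
have e : forall w, chi w * chi (w - d) = chi (1 - d * w^-1) - (w == 0)%:R.
  move=> w; case: eqVneq => [->|w0]; first by rewrite chi0 mul0r invr0 mulr0 subr0 chi1 subrr.
  rewrite subr0 -chiM -(chiMsq (1 - d * w^-1) w0); congr chi; field.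
  exact: w0.
under eq_bigr do rewrite e.
rewrite sumrB.
have -> : \sum_(i : F) (i == 0)%:R = 1 :> int.
  by rewrite (bigD1 0) //= eqxx big1 ?addr0 // => i /negPf ->.
rewrite (sum_inv (fun w => chi (1 - d * w))).
rewrite (sum_scale (fun w => chi (1 - w))) //.
rewrite (sum_opp (fun w => chi (1 + w))).
under eq_bigr do rewrite addrC.
by rewrite (sum_shift chi) sum_chi sub0r.
Qed.

Lemma Lquad (b c : F) : \sum_v chi ((v - b) * (v - c)) = if b == c then q - 1 else -1.
Proof.
rewrite -(sum_shift _ ((b + c) / 2)).
have e : forall w, (w + (b + c) / 2 - b) * (w + (b + c) / 2 - c) = w ^+ 2 - ((b - c) / 2) ^+ 2.
  by move=> w; field.
under eq_bigr do rewrite e.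
rewrite Ld; congr (if _ then _ else _).
rewrite sqrf_eq0 mulf_eq0 invr_eq0 (negPf h2) orbF subr_eq0 //.
Qed.

Definition E (u : F) : int := if u ^+ 2 == 1 then q else 0.

Lemma sum_delta (f : F -> int) a : \sum_u f u * (u == a)%:R = f a.
Proof.
rewrite (bigD1 a) //= eqxx mulr1 big1 ?addr0 // => u /negPf ->; by rewrite mulr0.
Qed.

Lemma one_neq_m1 : (1 : F) != -1.
Proof. apply: contra h2 => /eqP e; apply/eqP; rewrite mulr2n {2}e subrr //. Qed.

Lemma sumE (f : F -> int) : \sum_u f u * E u = q * (f 1 + f (-1)).
Proof.
have e : forall u, E u = q * ((u == 1)%:R + (u == -1)%:R).
  move=> u; rewrite /E sqrf_eq1; case: eqVneq => [->|u1] /=.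
    by rewrite (negPf one_neq_m1) addr0 mulr1.
  by case: eqVneq => _; rewrite ?mulr0 ?mulr1 ?add0r.
under eq_bigr do rewrite e mulrDr mulrDr !mulrA ![f _ * q]mulrC -!mulrA.
by rewrite big_split /= -!mulr_sumr !sum_delta mulrDr.
Qed.

Definition P (u v : F) := (u * v + 1) * (u + v).

Lemma Qlem (u : F) : \sum_v chi (P u v) = chi u * (E u - 1).
Proof.
case: (eqVneq u 0) => [->|u0].
  rewrite chi0 mul0r; etransitivity; last exact: sum_chi. apply: eq_bigr => v _; congr chi; rewrite /P; ring.
have e : forall v, P u v = u * ((v - (- u^-1)) * (v - (- u))).
  by move=> v; rewrite /P; field.
under eq_bigr do rewrite e chiM.
rewrite -mulr_sumr Lquad; congr (_ * _).
rewrite /E eqr_opp.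
have -> : (u^-1 == u) = (u ^+ 2 == 1).
  apply/eqP/eqP => h.
    by rewrite expr2 -{1}h mulVf.
  by rewrite -[LHS]mulr1 -h expr2 mulrA mulVf // mul1r.
by case: ifP => _; rewrite ?sub0r.
Qed.

Definition T11 := \sum_U \sum_V chi (U * V * P U V).

Lemma S_lem : \sum_u \sum_v (1 + chi u) * (1 + chi v) * chi (P u v)
  = 2 * q + 1 + q * chi (-1) + (q + 1) + T11.
Proof.
have e : forall u v, (1 + chi u) * (1 + chi v) * chi (P u v)
   = (1 + chi u) * chi (P u v) + chi v * chi (P u v) + chi (u * v * P u v).
  by move=> u v; rewrite !chiM; ring.
under eq_bigr do (under eq_bigr do rewrite e; rewrite !big_split /=).
rewrite !big_split /=; congr (_ + _ + _).
- under eq_bigr do rewrite -mulr_sumr Qlem mulrA mulrDl mul1r chi_sq2.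
  under eq_bigr do rewrite mulrBr mulr1.
  rewrite sumrB sumE big_split /= sum_chi sum_nz add0r chi1 oner_neq0 oppr_eq0 oner_neq0 /=.
  ring.
- have Ps : forall u v, P u v = P v u by move=> u v; rewrite /P; ring.
  under eq_bigr do (under eq_bigr do rewrite Ps).
  rewrite exchange_big /=.
  under eq_bigr do rewrite -mulr_sumr Qlem mulrA chi_sq2 mulrBr mulr1.
  rewrite sumrB sumE sum_nz oner_neq0 oppr_eq0 oner_neq0 /=.
  ring.
Qed.

Definition acoef := \sum_x chi (x ^+ 3 - x).

Lemma a2 : acoef * acoef = q * (1 + chi (-1)) + T11.
Proof.
rewrite /acoef mulr_suml.
have e1 : forall x, chi (x ^+ 3 - x) * \sum_y chi (y ^+ 3 - y)
   = \sum_r chi (r * (x ^+ 2 - 1) * (x ^+ 2 * r ^+ 2 - 1)).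
  move=> x; rewrite mulr_sumr; case: (eqVneq x 0) => [->|x0].
    rewrite expr0n subr0 chi0 big1; last by move=> y _; rewrite mul0r.
    symmetry; etransitivity; last exact: sum_chi.
    apply: eq_bigr => r _; congr chi; ring.
  rewrite -(sum_scale _ x0); apply: eq_bigr => r _.
  rewrite -chiM -[RHS](chiMsq _ x0); congr chi; ring.
under eq_bigr do rewrite e1.
rewrite (sumsq (fun u => \sum_r chi (r * (u - 1) * (u * r ^+ 2 - 1)))) /=.
under eq_bigr do rewrite mulrDl mul1r.
rewrite big_split /=; congr (_ + _).
- rewrite exchange_big /=.
  have e2 : forall r, \sum_u chi (r * (u - 1) * (u * r ^+ 2 - 1)) = chi r * (E r - 1).
    move=> r; case: (eqVneq r 0) => [->|r0].
      by rewrite chi0 mul0r big1 // => u _; rewrite !mul0r chi0.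
    have e3 : forall u, chi (r * (u - 1) * (u * r ^+ 2 - 1)) = chi r * chi ((u - 1) * (u - (r ^-1) ^+ 2)).
      move=> u; rewrite -chiM -[RHS](chiMsq _ r0); congr chi; field; exact: r0.
    under eq_bigr do rewrite e3.
    rewrite -mulr_sumr Lquad /E exprVn eq_sym invr_eq1.
    by case: ifP => _; rewrite ?sub0r.
  under eq_bigr do rewrite e2 mulrBr mulr1.
  by rewrite sumrB sumE sum_chi subr0 chi1.
- under eq_bigr do rewrite mulr_sumr.
  rewrite exchange_big /= /T11 -(sum_opp (fun U => \sum_V chi (U * V * P U V))) /=.
  apply: eq_bigr => r _; case: (eqVneq r 0) => [->|r0].
    by rewrite !big1 // => u _; rewrite ?oppr0 !mul0r chi0 ?mulr0.
  rewrite -[RHS](sum_scale _ r0); apply: eq_bigr => u _.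
  rewrite -chiM -[LHS](chiMsq _ r0). congr chi; rewrite /P; ring.
Qed.

Lemma sum_pair (A B : finType) (f : A * B -> int) : \sum_t f t = \sum_a \sum_b f (a, b).
Proof. by rewrite pair_big /=; apply: eq_bigr => -[a b]. Qed.

Lemma sum_one : \sum_(x : F) 1 = q :> int.
Proof. by rewrite sumr_const /q -natz. Qed.

Lemma Mgen : (#|[set t : F * F * F | let: (x, y, z) := t in
      z ^+ 2 == (x ^+ 2 * y ^+ 2 + 1) * (x ^+ 2 + y ^+ 2)]|)%:Z
   = q * q + \sum_u \sum_v (1 + chi u) * (1 + chi v) * chi (P u v).
Proof.
rewrite card_setZ.
transitivity (\sum_(x : F) \sum_(y : F) \sum_(z : F)
   ((z ^+ 2 == (x ^+ 2 * y ^+ 2 + 1) * (x ^+ 2 + y ^+ 2)) : bool)%:R : int).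
  by rewrite sum_pair sum_pair.
have e : forall x y : F, \sum_(z : F) ((z ^+ 2 == (x ^+ 2 * y ^+ 2 + 1) * (x ^+ 2 + y ^+ 2)) : bool)%:R
    = 1 + chi (P (x ^+ 2) (y ^+ 2)) :> int.
  move=> x y; rewrite -card_setZ card_sqrt; congr (1 + chi _); rewrite /P; ring.
under eq_bigr do (under eq_bigr do rewrite e; rewrite big_split /=).
rewrite big_split /= sum_one; congr (_ + _).
  by rewrite sumr_const -mulr_natr natz.
have s1 : forall w : F, \sum_(y : F) chi (P w (y ^+ 2)) = \sum_v (1 + chi v) * chi (P w v).
  by move=> w; apply: (sumsq (fun v => chi (P w v))).
have s2 : \sum_(x : F) \sum_(v : F) (1 + chi v) * chi (P (x ^+ 2) v)
     = \sum_u (1 + chi u) * \sum_v (1 + chi v) * chi (P u v).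
  by apply: (sumsq (fun u => \sum_v (1 + chi v) * chi (P u v))).
under eq_bigr do rewrite s1.
rewrite s2.
by apply: eq_bigr => u _; rewrite mulr_sumr; apply: eq_bigr => v _; rewrite mulrA.
Qed.

Lemma Ngen : (#|[set t : F * F | let: (x, y) := t in y ^+ 2 == x ^+ 3 - x]|)%:Z = q + acoef.
Proof.
rewrite card_setZ.
transitivity (\sum_(x : F) \sum_(y : F) ((y ^+ 2 == x ^+ 3 - x) : bool)%:R : int).
  by rewrite sum_pair.
rewrite /acoef -sum_one -big_split /=.
by apply: eq_bigr => x _; rewrite -card_setZ card_sqrt.
Qed.

Lemma main_gen : (#|[set t : F * F * F | let: (x, y, z) := t in
      z ^+ 2 == (x ^+ 2 * y ^+ 2 + 1) * (x ^+ 2 + y ^+ 2)]|)%:Z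
   = (q + 1) ^+ 2 + acoef ^+ 2 + 1.
Proof.
rewrite Mgen S_lem.
have := a2; rewrite -expr2 => ->.
ring.
Qed.

Lemma chim1_3 k : #|F| = (4 * k + 3)%N -> chi (-1) = -1.
Proof.
move=> hk; have [e1 e2] := card_SQNS.
have hm : m = (2 * k + 1)%N by rewrite /m; lia.
apply: intr_inj3; first exact: chi_vals.
  by rewrite eqxx !orbT.
rewrite chi_pow hm exprD exprM sqrrN expr1n expr1n mul1r mulrN1z //.
Qed.

Lemma acoef0 : chi (-1) = -1 -> acoef = 0.
Proof.
move=> hm.
have : acoef = chi (-1) * acoef.
  rewrite /acoef mulr_sumr -[LHS]sum_opp; apply: eq_bigr => x _.
  rewrite -chiM; congr chi; ring.
rewrite hm mulN1r => h; lia.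
Qed.
End Chi.


Section Fp.
Variable p : nat.
Hypothesis hp : prime p.

Lemma valFp_lt (x : 'F_p) : (val x < p)%N.
Proof. by rewrite -[in X in (_ < X)%N](Fp_cast hp); exact: ltn_ord. Qed.

Lemma sumFp (f : 'F_p -> int) : \sum_(x : 'F_p) f x = \sum_(0 <= i < p) f (i%:R).
Proof.
rewrite big_mkord.
pose g (x : 'F_p) : 'I_p := Ordinal (valFp_lt x).
rewrite (reindex (fun i : 'I_p => (i : nat)%:R : 'F_p)) //.
exists g => x _.
  by apply: val_inj; rewrite /= val_Fp_nat // modn_small.
by apply: val_inj; rewrite /= val_Fp_nat // modn_small // valFp_lt.
Qed.
End Fp.



Lemma legendre_chi (p n : nat) : prime p -> legendre n%:Z p = chi (n%:R : 'F_p).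
Proof.
move=> hp; rewrite /legendre /chi dvdzE /= (dvdn_pcharf (pchar_Fp hp)).
by rewrite -pmulrn.
Qed.

Theorem theorem4p5 (p : nat) (hp : prime p) (hodd : odd p) :
  (M_count p)%:Z = (p%:Z + 1) ^+ 2 + ((N_count p)%:Z - p%:Z) ^+ 2 + 1
  /\ (forall k : nat, p = (4 * k + 1)%N ->
        (M_count p)%:Z = (p%:Z + 1) ^+ 2 + (J p k) ^+ 2 + 1)
  /\ (forall k : nat, p = (4 * k + 3)%N ->
        (M_count p)%:Z = (p%:Z + 1) ^+ 2 + 1).
Proof.
have h2 : (2 : 'F_p) != 0.
  rewrite -(dvdn_pcharf (pchar_Fp hp)); apply/negP => /(dvdn_leq (isT : (0 < 2)%N)) h.
  have := prime_gt1 hp; move: hodd h; clear; case: p => [|[|[|]]] //.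
have hq : q 'F_p = p%:Z by rewrite /q card_Fp.
have hM := main_gen h2.
have hN := Ngen h2.
rewrite hq in hM hN.
have hM' : (M_count p)%:Z = (p%:Z + 1) ^+ 2 + acoef 'F_p ^+ 2 + 1 by exact: hM.
have hN' : (N_count p)%:Z - p%:Z = acoef 'F_p .
  have hN2 : (N_count p)%:Z = p%:Z + acoef 'F_p by exact: hN.
  by rewrite hN2 addrAC subrr add0r.
split; first by rewrite hN'.
split; last first.
  move=> k hk; rewrite hM' (acoef0 h2 (@chim1_3 _ h2 k _)); last by rewrite card_Fp.
  by rewrite expr0n addr0.
move=> k hk; rewrite hM'; congr (_ + _ ^+ 2 + _).
have k0 : (0 < k)%N by case: k hk => // hk; move: hp; rewrite hk.
set n := (4 * k - 2)%N.
have hpn : p = (n.+1.+2)%N by rewrite /n; lia.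
pose g (i : nat) := chi ((i%:R : 'F_p) ^+ 3 - i%:R).
have hp0 : (n.+1.+2)%:R = 0 :> 'F_p by rewrite -hpn pchar_Fp_0.
rewrite /acoef (sumFp hp (fun x => chi (x ^+ 3 - x))) /=.
rewrite big_ltn; last by rewrite hpn.
have bound_eq : forall (N M : nat) (f : nat -> int), N = M ->
    \sum_(1 <= i < N) f i = \sum_(1 <= i < M) f i by move=> N M f ->.
rewrite mulr0n exprS mul0r subrr chi0 add0r (bound_eq _ _ _ hpn) big_add1 big_ltn //.
rewrite mulr1n expr1n subrr chi0 add0r /= big_nat_recr //=.
rewrite -/(g n.+2).
have -> : g n.+2 = 0.
  rewrite /g; have -> : (n.+2%:R : 'F_p) = -1.
    by apply/eqP; rewrite -subr_eq0 opprK -(natrD _ n.+2 1) addn1 hp0.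
  by rewrite exprS sqrrN expr1n mulr1 subrr chi0.
rewrite addr0 /J -/n.
apply: eq_bigr => i _; rewrite legendre_chi // /g; congr chi.
rewrite !natrM !natrD; ring.
Qed.
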